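(* Let $H=\sum_{a\in\mathcal T}\lambda_aQ_a$ be a Hamiltonian on $n$ qubits, with $Q_a$ Pauli strings, $|\lambda_a|\le1$ and $|\mathrm{supp}(Q_a)|\le k$ for all $a$. Fix an ordering $(a_1,\dots,a_M)$ of $\mathcal T$ ($M=|\mathcal T|$), a step size $\delta>0$, and write $G_m:=e^{\delta\lambda_{a_m}Q_{a_m}}$. For integers $p\ge0$ and $0\le j<M$ let $$U_{\mathrm{right}}^{(p,j)}:=(G_1G_2\cdots G_M)^p\,(G_1\cdots G_j),\qquad U_{\mathrm{left}}^{(p,j)}:=(G_j\cdots G_1)\,(G_M\cdots G_1)^p,$$ and $X_{p,j}:=U_{\mathrm{left}}^{(p,j)}U_{\mathrm{right}}^{(p,j)}$. Let $P\ne\mathbb I$ be a Pauli string with support $R$, $w:=|R|$, $r:=\lceil w/k\rceil$, and let $B:=|\{a\in\mathcal T:\mathrm{supp}(Q_a)\cap R\ne\emptyset\}|$. Set $\beta:=(p+1)\delta$. Then $$2^{-n}\,|\operatorname{Tr}(PX_{p,j})|\le\Big(\frac{2e\beta Be^{\delta}}{r}\Big)^{r}e^{2\beta M}.$$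
   Context: $\mathrm{supp}(Q)$ is the set of qubits on which the Pauli string $Q$ acts non-trivially. *)

(* Defs.v *)
From HB Require Import structures.
From mathcomp Require Import all_boot all_order all_algebra.
From mathcomp Require Import complex.
From mathcomp Require Import all_classical all_reals all_analysis.
Set Implicit Arguments. Unset Strict Implicit. Unset Printing Implicit Defensive.
Import Order.TTheory GRing.Theory Num.Theory.
Import numFieldNormedType.Exports.
Local Open Scope ring_scope.
Local Open Scope complex_scope.

Inductive pauli1 := PI | PX | PY | PZ.

Definition is_id (s : pauli1) : bool := if s is PI then true else false.

Definition pauli_string (n : nat) := 'I_n -> pauli1.

Definition supp (n : nat) (P : pauli_string n) : {set 'I_n} :=
  [set q | ~~ is_id (P q)].

(* entry <b1| s |b2> of a single-qubit Pauli matrix, basis |false>=|0>, |true>=|1> *)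
Definition pauli1_entry (R : rcfType) (s : pauli1) (b1 b2 : bool) : R[i] :=
  match s with
  | PI => if b1 == b2 then 1 else 0
  | PX => if b1 == b2 then 0 else 1
  | PY => if b1 == b2 then 0 else if b1 then 'i else - 'i
  | PZ => if b1 == b2 then (if b1 then -1 else 1) else 0
  end.

(* value of qubit q in computational basis index x : bit q of x *)
Definition qbit (x q : nat) : bool := odd (x %/ 2 ^ q).

Definition pauli_mx (R : rcfType) (n : nat) (P : pauli_string n) : 'M[R[i]]_(2 ^ n) :=
  \matrix_(x, y) \prod_(q < n) pauli1_entry R (P q) (qbit x q) (qbit y q).

Definition expm_partial (R : rcfType) (N : nat) (A : 'M[R[i]]_N) (K : nat) : 'M[R[i]]_N :=
  \sum_(k < K) (k`!%:R)^-1 *: A ^+ k.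

Definition expm (R : realType) (N : nat) (A : 'M[R[i]]_N) : 'M[R[i]]_N :=
  \matrix_(x, y) ((limn (fun K : nat => (complex.Re (expm_partial A K x y) : R)))
              +i* (limn (fun K : nat => (complex.Im (expm_partial A K x y) : R)))).

(* Main.v *)
Require Import Defs.
From HB Require Import structures.
From mathcomp Require Import all_boot all_order all_algebra.
From mathcomp Require Import complex.
From mathcomp Require Import all_classical all_reals all_analysis.
From mathcomp Require Import ring lra.
From mathcomp Require Import zify.
Set Implicit Arguments. Unset Strict Implicit. Unset Printing Implicit Defensive.
Import Order.TTheory GRing.Theory Num.Theory.
Import numFieldNormedType.Exports.
Local Open Scope ring_scope.
Local Open Scope complex_scope.

Lemma sum_double (V : nmodType) (H : nat -> V) m :
  \sum_(0 <= z < (2 * m)%N) H z = \sum_(0 <= z < m) (H (2 * z)%N + H (2 * z).+1).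
Proof.
elim: m => [|m IH]; first by rewrite !big_geq.
rewrite mulnS !big_nat_recr //= ?IH ?addrA //.
Qed.

Lemma qbitS z q : qbit z q.+1 = qbit (z %/ 2) q.
Proof. by rewrite /qbit expnS divnMA. Qed.

Lemma sum_bits (T : comPzRingType) n (F : 'I_n -> bool -> T) :
  \sum_(z < 2 ^ n) \prod_(q < n) F q (qbit z q) = \prod_(q < n) (F q false + F q true).
Proof.
elim: n F => [|n IH] F.
  by rewrite big_ord0 expn0 big_ord1 big_ord0.
rewrite big_ord_recl -(IH (fun q => F (lift ord0 q))).
rewrite -(big_mkord xpredT (fun z => \prod_(q < n.+1) F q (qbit z q))) /=.
rewrite expnS sum_double big_distrr /=.
rewrite -(big_mkord xpredT (fun i => (F ord0 false + F ord0 true) * \prod_(q < n) F (lift ord0 q) (qbit i q))).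
apply: eq_bigr => z _.
rewrite !big_ord_recl /qbit /= !expn0 !divn1.
have h1 : odd (2 * z)%N = false by rewrite oddM.
have h2 : odd (2 * z).+1 = true by rewrite /= oddM.
rewrite h1 h2 mulrDl; congr (_ + _); congr (_ * _); apply: eq_bigr => q _;
  rewrite /bump /= add1n expnS divnMA.
- by rewrite mulKn.
- have -> : ((2 * z).+1 %/ 2 = z)%N by rewrite -addn1 mulnC divnMDl // divn_small // addn0.
  by [].
Qed.

Lemma bits_inj n x y : (x < 2 ^ n)%N -> (y < 2 ^ n)%N ->
  (forall q, (q < n)%N -> qbit x q = qbit y q) -> x = y.
Proof.
elim: n x y => [|n IH] x y.
  by rewrite expn0 !ltnS !leqn0 => /eqP -> /eqP ->.
move=> hx hy h.
rewrite (divn_eq x 2) (divn_eq y 2) !modn2.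
have h0 := h 0%N isT; rewrite /qbit !expn0 !divn1 in h0; rewrite h0.
congr (_ * _ + _)%N; apply: IH.
- by rewrite ltn_divLR // mulnC -expnS.
- by rewrite ltn_divLR // mulnC -expnS.
- by move=> q hq; rewrite -!qbitS; apply: h.
Qed.

Section Tens.
Variable R : rcfType.
Local Notation C := R[i].

Definition tens n (f : 'I_n -> bool -> bool -> C) : 'M[C]_(2 ^ n) :=
  \matrix_(x, y) \prod_(q < n) f q (qbit x q) (qbit y q).

Definition mul2 (A B : bool -> bool -> C) (b1 b2 : bool) : C :=
  A b1 false * B false b2 + A b1 true * B true b2.

Definition id2 : bool -> bool -> C := pauli1_entry R PI.

Lemma pauli_tens n (P : pauli_string n) :
  pauli_mx R P = tens (fun q => pauli1_entry R (P q)).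
Proof. by []. Qed.

Lemma tensM n (f g : 'I_n -> bool -> bool -> C) :
  tens f * tens g = tens (fun q => mul2 (f q) (g q)).
Proof.
apply/matrixP => x y; rewrite -mulmxE !mxE.
under eq_bigr do rewrite !mxE -big_split /=.
exact: (sum_bits (fun q b => f q (qbit x q) b * g q b (qbit y q))).
Qed.

Lemma tens_tr n (f : 'I_n -> bool -> bool -> C) :
  \tr (tens f) = \prod_(q < n) (f q false false + f q true true).
Proof.
rewrite /mxtrace; under eq_bigr do rewrite mxE.
exact: (sum_bits (fun q b => f q b b)).
Qed.

Lemma tens1 n : tens (fun _ : 'I_n => id2) = 1.
Proof.
apply/matrixP => x y; rewrite !mxE /id2 /=.
have [->|nxy] := eqVneq x y.
  by rewrite big1 // => q _; rewrite eqxx.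
have [q hq] : exists q : 'I_n, qbit x q != qbit y q.
  apply/existsP; apply: contraNT nxy; rewrite negb_exists => /forallP hall.
  apply/eqP; apply: val_inj; apply: (@bits_inj n); try exact: ltn_ord.
  by move=> q qn; have := hall (Ordinal qn); rewrite negbK => /eqP.
by rewrite (bigD1 q) //= (negbTE hq) mul0r.
Qed.

End Tens.

Section Pauli.
Variable R : rcfType.
Local Notation C := R[i].
Local Notation pe := (pauli1_entry R).

Lemma normi : `|'i| = 1 :> C.
Proof. by rewrite complexiE normCi. Qed.

Lemma pe_sq (s : pauli1) : mul2 (pe s) (pe s) = id2 R.
Proof.
apply/funext => b1; apply/funext => b2.
case: s; case: b1; case: b2; rewrite /mul2 /id2 /= ?mul0r ?mulr0 ?add0r ?addr0 ?mulr1 //.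
- by rewrite mulrN -expr2 sqr_i opprK.
- by rewrite mulNr -expr2 sqr_i opprK.
- by rewrite mulrNN mulr1.
Qed.

Lemma mul2_id (A : bool -> bool -> C) : mul2 A (id2 R) = A.
Proof.
apply/funext => b1; apply/funext => b2.
by case: b2; rewrite /mul2 /id2 /= ?mulr0 ?mulr1 ?add0r ?addr0.
Qed.

Definition rn (A : bool -> bool -> C) := forall b, `|A b false| + `|A b true| <= 1.

Lemma rn_mul2 A B : rn A -> rn B -> rn (mul2 A B).
Proof.
move=> hA hB b; rewrite /mul2.
apply: le_trans (lerD (ler_normD _ _) (ler_normD _ _)) _.
rewrite !normrM.
have e : `|A b false| * `|B false false| + `|A b true| * `|B true false| +
   (`|A b false| * `|B false true| + `|A b true| * `|B true true|) =
   `|A b false| * (`|B false false| + `|B false true|) +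
   `|A b true| * (`|B true false| + `|B true true|) by ring.
rewrite e; apply: le_trans (hA b).
by apply: lerD; rewrite ler_piMr // hB.
Qed.

Lemma rn_pe s : rn (pe s).
Proof.
move=> b; case: s; case: b; rewrite /= ?normr0 ?normr1 ?add0r ?addr0 ?normrN ?normi ?normr1 //.
Qed.

Lemma tr2_pe s : ~~ is_id s -> pe s false false + pe s true true = 0.
Proof. by case: s => //= _; rewrite ?addr0 ?addrN // addrC subrr. Qed.

Lemma tr2_rn A : rn A -> `|A false false + A true true| <= 2.
Proof.
move=> h; apply: le_trans (ler_normD _ _) _.
have h1 := h false; have h2 := h true.
have e1 : `|A false false| <= 1 by apply: le_trans h1; rewrite lerDl.
have e2 : `|A true true| <= 1 by apply: le_trans h2; rewrite lerDr.
by have := lerD e1 e2.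
Qed.

End Pauli.

Local Open Scope classical_set_scope.

Section Expm.
Variable R : realType.
Local Notation C := R[i].

Definition chR (c : R) := (expR c + expR (- c)) / 2.
Definition shR (c : R) := (expR c - expR (- c)) / 2.

Lemma exprA_sq N (A : 'M[C]_N) : A * A = 1 -> forall k, A ^+ k = if odd k then A else 1.
Proof.
move=> h; elim => [|k IH]; first by rewrite expr0.
by rewrite exprS IH /=; case: (odd k) => /=; rewrite ?h ?mulr1.
Qed.

Lemma exprZ_mx N (a : C) (A : 'M[C]_N) k : (a *: A) ^+ k = a ^+ k *: A ^+ k.
Proof.
elim: k => [|k IH]; first by rewrite !expr0 scale1r.
rewrite !exprS IH -!mulmxE scalemxAl -scalemxAr.
by rewrite !scalemxAl scalerA mulrC.
Qed.

Definition evs (c : R) K := \sum_(0 <= k < K) (if odd k then 0 else c ^+ k / k`!%:R).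
Definition ods (c : R) K := \sum_(0 <= k < K) (if odd k then c ^+ k / k`!%:R else 0).

Lemma evsE c K : evs c K = (series (exp_coeff c) K + series (exp_coeff (-c)) K) / 2.
Proof.
rewrite /series /= -big_split /= mulr_suml; apply: eq_bigr => k _.
rewrite /exp_coeff /= exprNn -signr_odd; case: (odd k); rewrite /= ?expr0 ?expr1 ?mulN1r ?mul1r ?mulNr; set t := _ / k`!%:R; lra.
Qed.

Lemma odsE c K : ods c K = (series (exp_coeff c) K - series (exp_coeff (-c)) K) / 2.
Proof.
rewrite /series /= -sumrB /= mulr_suml; apply: eq_bigr => k _.
rewrite /exp_coeff /= exprNn -signr_odd; case: (odd k); rewrite /= ?expr0 ?expr1 ?mulN1r ?mul1r ?mulNr; set t := _ / k`!%:R; lra.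
Qed.

Lemma evs_cvg c : evs c @ \oo --> chR c.
Proof.
have -> : evs c = fun K => (series (exp_coeff c) K + series (exp_coeff (-c)) K) / 2.
  by apply/funext => K; exact: evsE.
apply: cvgMl; apply: cvgD; exact: is_cvg_series_exp_coeff.
Qed.

Lemma ods_cvg c : ods c @ \oo --> shR c.
Proof.
have -> : ods c = fun K => (series (exp_coeff c) K - series (exp_coeff (-c)) K) / 2.
  by apply/funext => K; exact: odsE.
apply: cvgMl; apply: cvgB; exact: is_cvg_series_exp_coeff.
Qed.

Lemma ReIm_lin (a b : R) (z w : C) :
  (a * complex.Re z + b * complex.Re w) +i* (a * complex.Im z + b * complex.Im w) = a%:C * z + b%:C * w.
Proof. by case: z => zr zi; case: w => wr wi; apply/eqP; rewrite eq_complex /= !mul0r !subr0 !addr0 !eqxx. Qed.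

Lemma Re_lin (a b : R) (z w : C) :
  complex.Re (a%:C * z + b%:C * w) = a * complex.Re z + b * complex.Re w.
Proof. by case: z => zr zi; case: w => wr wi /=; rewrite !mul0r !subr0. Qed.

Lemma Im_lin (a b : R) (z w : C) :
  complex.Im (a%:C * z + b%:C * w) = a * complex.Im z + b * complex.Im w.
Proof. by case: z => zr zi; case: w => wr wi /=; rewrite !mul0r !addr0. Qed.

Lemma expm_sq N (A : 'M[C]_N) (c : R) : A * A = 1 ->
  expm (c%:C *: A) = (chR c)%:C *: (1 : 'M[C]_N) + (shR c)%:C *: A.
Proof.
move=> h.
have hp : forall K, expm_partial (c%:C *: A) K = (evs c K)%:C *: (1 : 'M[C]_N) + (ods c K)%:C *: A.
  move=> K; rewrite /expm_partial /evs /ods !big_mkord !rmorph_sum !scaler_suml -big_split /=.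
  apply: eq_bigr => k _; rewrite exprZ_mx (exprA_sq h) scalerA.
  case: (odd k); rewrite ?rmorph0 ?scale0r ?add0r ?addr0; congr (_ *: _);
  by rewrite rmorphM rmorphXn fmorphV rmorph_nat mulrC.
apply/matrixP => x y; rewrite !mxE.
have -> : (fun K => complex.Re (expm_partial (c%:C *: A) K x y)) =
   (fun K => evs c K * complex.Re ((1 : 'M[C]_N) x y) + ods c K * complex.Re (A x y)).
  apply/funext => K; rewrite hp !mxE.
  exact: Re_lin.
have -> : (fun K => complex.Im (expm_partial (c%:C *: A) K x y)) =
   (fun K => evs c K * complex.Im ((1 : 'M[C]_N) x y) + ods c K * complex.Im (A x y)).
  apply/funext => K; rewrite hp !mxE.
  exact: Im_lin.
rewrite (cvg_lim _ (cvgD (cvgMl (evs_cvg (c:=c))) (cvgMl (ods_cvg (c:=c))))) //.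
rewrite (cvg_lim _ (cvgD (cvgMl (evs_cvg (c:=c))) (cvgMl (ods_cvg (c:=c))))) //.
by rewrite ReIm_lin mxE.
Qed.

End Expm.

Local Close Scope classical_set_scope.

Section Coef.
Variable R : realType.

Lemma chRN (x : R) : chR (- x) = chR x.
Proof. by rewrite /chR opprK addrC. Qed.
Lemma shRN (x : R) : shR (- x) = - shR x.
Proof. rewrite /shR opprK; lra. Qed.

Lemma chR_gt0 (x : R) : 0 < chR x.
Proof. by rewrite /chR divr_gt0 // addr_gt0 // expR_gt0. Qed.

Lemma chsh_pos (x : R) : 0 <= x ->
  [/\ 0 <= shR x, chR x + shR x = expR x & shR x <= x * expR x].
Proof.
move=> hx; split.
- rewrite /shR divr_ge0 // subr_ge0 ler_expR; lra.
- rewrite /chR /shR; lra.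
- have h1 := expR_ge1Dx (- (2 * x)).
  have e : expR x * expR (- (2 * x)) = expR (- x).
    by rewrite -expRD; congr expR; lra.
  have h2 : expR x * (1 + - (2 * x)) <= expR (- x).
    by rewrite -e; apply: ler_wpM2l => //; exact: expR_ge0.
  have hp := expR_gt0 x.
  rewrite /shR; nra.
Qed.

Lemma coef_facts (d c : R) : `|c| <= d ->
  [/\ `|chR c| + `|shR c| <= expR d & `|shR c| <= d * expR d].
Proof.
move=> hcd.
have key : forall x : R, 0 <= x -> x <= d ->
    `|chR x| + `|shR x| <= expR d /\ `|shR x| <= d * expR d.
  move=> x hx hxd; have [s0 e sb] := chsh_pos hx.
  rewrite (ger0_norm (ltW (chR_gt0 x))) (ger0_norm s0) e ler_expR; split => //.
  apply: le_trans sb _; apply: ler_pM; rewrite ?expR_ge0 ?ler_expR //.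
have [hc|hc] := lerP 0 c.
  have hcd' : c <= d by rewrite -(ger0_norm hc).
  by have [] := key c hc hcd'.
have hc' : 0 <= - c by lra.
have hcd' : - c <= d by rewrite -(ltr0_norm hc).
have [k1 k2] := key (- c) hc' hcd'.
by rewrite chRN shRN normrN in k1 k2.
Qed.

End Coef.

Section Step.
Variable R : realType.

Lemma step_real (a s s0 E T : R) (N u r : nat) (b : bool) :
  `|a| + `|s| <= E -> `|s| <= s0 -> 0 <= s0 -> 1 <= E -> 0 <= T ->
  `|a| * (T * ('C(N, r - u))%:R * s0 ^+ (r - u)) +
  `|s| * (T * ('C(N, r - (u + b)))%:R * s0 ^+ (r - (u + b)))
   <= T * E * ('C(N + b, r - u))%:R * s0 ^+ (r - u).
Proof.
move=> hE hs hs0 h1 hT.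
have ha : `|a| <= E by apply: le_trans hE; rewrite lerDl.
case: b; last first.
  rewrite !addn0 -mulrDl.
  have -> : T * E * ('C(N, r - u))%:R * s0 ^+ (r - u) = E * (T * ('C(N, r - u))%:R * s0 ^+ (r - u)) by ring.
  apply: ler_wpM2r => //; by rewrite !mulr_ge0 // exprn_ge0.
rewrite addn1.
case hd: (r - u)%N => [|d].
  have -> : (r - u.+1 = 0)%N by rewrite subnS hd.
  rewrite !bin0 !expr0 !mulr1 -mulrDl mulrC; apply: ler_wpM2l => //.
have -> : (r - u.+1 = d)%N by rewrite subnS hd.
rewrite addn1 binS natrD.
set X1 := T * ('C(N, d.+1))%:R * s0 ^+ d.+1.
set X2 := T * ('C(N, d))%:R * s0 ^+ d.
have -> : T * E * (('C(N, d.+1))%:R + ('C(N, d))%:R) * s0 ^+ d.+1 = E * X1 + E * (s0 * X2)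
  by rewrite /X1 /X2 exprS; ring.
have hX1 : 0 <= X1 by rewrite /X1 !mulr_ge0 // exprn_ge0.
have hX2 : 0 <= X2 by rewrite /X2 !mulr_ge0 // exprn_ge0.
apply: lerD; first exact: ler_wpM2r.
apply: (@le_trans _ _ (s0 * X2)); first exact: ler_wpM2r.
by rewrite -[X in X <= _]mul1r; apply: ler_wpM2r => //; rewrite mulr_ge0.
Qed.

End Step.

Lemma norm_realC (R : rcfType) (x : R) : `|x%:C| = `|x|%:C.
Proof. by rewrite normc_def /= expr0n addr0 sqrtr_sqr. Qed.

Lemma realCM (R : rcfType) (a b : R) : (a * b)%:C = a%:C * b%:C.
Proof. by apply/eqP; rewrite eq_complex /= !mul0r !mulr0 subr0 addr0 !eqxx. Qed.
Lemma realCD (R : rcfType) (a b : R) : (a + b)%:C = a%:C + b%:C.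
Proof. by apply/eqP; rewrite eq_complex /= addr0 !eqxx. Qed.

Section Key.
Variable R : realType.
Variables (n M k : nat) (lam : 'I_M -> R) (Q : 'I_M -> pauli_string n)
  (delta : R) (P : pauli_string n).
Hypotheses (hlam : forall a, `|lam a| <= 1) (hQ : forall a, (#|supp (Q a)| <= k)%N)
  (hk : (0 < k)%N) (hdelta : 0 < delta).
Local Notation C := R[i].
Local Notation pe := (pauli1_entry R).

Definition rr := ((#|supp P| + k.-1) %/ k)%N.
Definition Bset := [set a : 'I_M | supp (Q a) :&: supp P != finset.set0].
Definition Gm (m : 'I_M) := (chR (delta * lam m))%:C *: (1 : 'M[C]_(2 ^ n))
   + (shR (delta * lam m))%:C *: pauli_mx R (Q m).
Definition Bnd (L : seq 'I_M) (u : nat) : R := 2 ^+ n * expR (delta * (size L)%:R)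
   * ('C(count (mem Bset) L, rr - u))%:R * (delta * expR delta) ^+ (rr - u).
Definition Cset (f : 'I_n -> bool -> bool -> C) :=
  [set q in supp P | ~~ `[< f q = pe (P q) >]].

Lemma Bnd_ge0 L u : 0 <= Bnd L u.
Proof.
by rewrite /Bnd !mulr_ge0 ?exprn_ge0 ?expR_ge0 // mulr_ge0 ?expR_ge0 // ltW.
Qed.

Lemma base f u : (forall q, rn (f q)) -> (#|Cset f| <= u * k)%N ->
  `|\tr (tens f)| <= (Bnd [::] u)%:C.
Proof.
move=> hrn hC; rewrite tens_tr.
case: (leqP rr u) => hru.
  rewrite /Bnd; have -> : (rr - u = 0)%N by apply/eqP; rewrite subn_eq0.
  rewrite /= mulr0 expR0 bin0 !mulr1 ?expr0 ?mulr1 normr_prod.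
  rewrite rmorphXn /= -[in X in _ <= X](card_ord n) -prodr_const.
  apply: ler_prod => q _; rewrite normr_ge0 /= rmorph_nat; exact: tr2_rn.
have hlt : (u * k < #|supp P|)%N.
  move: hru; rewrite /rr leq_divRL // => h; lia.
have : ~~ (supp P \subset Cset f).
  apply/negP => /subset_leq_card h; have := leq_trans h hC; lia.
case/subsetPn => q hqP hqC.
have hq : f q = pe (P q).
  by move: hqC; rewrite /Cset inE hqP /= negbK => /asboolP.
rewrite (bigD1 q) //= hq tr2_pe; last by move: hqP; rewrite inE.
by rewrite mul0r normr0 ler0c Bnd_ge0.
Qed.

Lemma pe_id s : is_id s -> pe s = id2 R.
Proof. by case: s. Qed.

Lemma key L : forall f u, (forall q, rn (f q)) -> (#|Cset f| <= u * k)%N ->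
  `|\tr (tens f * \prod_(m <- L) Gm m)| <= (Bnd L u)%:C.
Proof.
elim: L => [|m L IH] f u hrn hC.
  by rewrite big_nil mulr1; exact: base.
set c := delta * lam m.
set f' := fun q => mul2 (f q) (pe (Q m q)).
have E : tens f * Gm m = (chR c)%:C *: tens f + (shR c)%:C *: tens f'.
  rewrite /Gm mulrDr -!mulmxE -!scalemxAr mulmx1 mulmxE pauli_tens tensM //.
rewrite big_cons mulrA E mulrDl -!mulmxE -!scalemxAl mxtraceD !mxtraceZ !mulmxE.
apply: le_trans (ler_normD _ _) _; rewrite !normrM !norm_realC.
have hrn' : forall q, rn (f' q) by move=> q; apply: rn_mul2 => //; exact: rn_pe.
have hC' : (#|Cset f'| <= (u + (m \in Bset)) * k)%N.
  have sub : Cset f' \subset Cset f :|: (supp (Q m) :&: supp P).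
    apply/fintype.subsetP => q; rewrite /Cset !inE => /andP [hqP hne].
    case hid: (is_id (Q m q)); last by rewrite hqP orbT.
    move: hne; rewrite /f' (pe_id hid) mul2_id => hne.
    by rewrite hqP hne.
  apply: leq_trans (subset_leq_card sub) _.
  rewrite cardsU mulnDl; apply: leq_trans (leq_subr _ _) _; apply: leq_add => //.
  case hmB: (m \in Bset).
    rewrite mul1n; apply: leq_trans (hQ m); apply: subset_leq_card; exact: subsetIl.
  by move: hmB; rewrite inE => /negbFE/eqP ->; rewrite cards0.
have I1 := IH f u hrn hC.
have I2 := IH f' _ hrn' hC'.
have hcd : `|c| <= delta.
  rewrite /c normrM (gtr0_norm hdelta) -[X in _ <= X]mulr1.
  by apply: ler_wpM2l => //; exact: ltW.
have [hE hs] := coef_facts hcd.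
apply: le_trans (lerD (ler_wpM2l _ I1) (ler_wpM2l _ I2)) _; try by rewrite ler0c normr_ge0.
rewrite -!realCM -realCD lecR.
have -> : Bnd (m :: L) u = 2 ^+ n * expR (delta * (size L)%:R) * expR delta
   * ('C(count (mem Bset) L + (m \in Bset), rr - u))%:R * (delta * expR delta) ^+ (rr - u).
  rewrite /Bnd /= addnC; congr (_ * _ * _); rewrite -mulrA -expRD; congr (_ * expR _).
  by rewrite -addn1 natrD mulrDr mulr1.
apply: step_real => //.
  by rewrite mulr_ge0 ?expR_ge0 // ltW.
by rewrite -expR0 ler_expR ltW.
Qed.

End Key.

Lemma ffact_le_exp n m : (n ^_ m <= n ^ m)%N.
Proof.
elim: m n => [|m IH] n; first by rewrite ffactn0 expn0.
rewrite ffactnS expnS leq_mul //; apply: leq_trans (IH _) _.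
elim: m {IH} => [|m IH]; first by rewrite !expn0.
by rewrite !expnS leq_mul // leq_pred.
Qed.

Section Final.
Variable R : realType.

Lemma binr_le N r : ('C(N, r))%:R <= (N%:R : R) ^+ r / (r`!)%:R.
Proof.
have hf : 0 < (r`!)%:R :> R by rewrite ltr0n fact_gt0.
rewrite ler_pdivlMr // -natrM -natrX ler_nat bin_ffact; exact: ffact_le_exp.
Qed.

Lemma fact_lb r : (0 < r)%N -> (r%:R : R) ^+ r / (r`!)%:R <= expR 1 ^+ r.
Proof.
case: r => // r _.
have h := @expR_ge1Dxn R (r.+1)%:R r (ler0n _ _).
rewrite -expRM_natl mulr1; apply: le_trans h; rewrite lerDr //.
Qed.

Lemma final_real (N NB r : nat) (delta y : R) :
  0 < delta -> (0 < r)%N -> NB%:R * delta <= y ->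
  ('C(NB, r))%:R * (delta * expR delta) ^+ r
    <= (expR 1 * y * expR delta / r%:R) ^+ r.
Proof.
move=> hd hr hy.
have hf : 0 < (r`!)%:R :> R by rewrite ltr0n fact_gt0.
have hr0 : 0 < r%:R :> R by rewrite ltr0n.
have hy0 : 0 <= y by apply: le_trans hy; rewrite mulr_ge0 // ltW.
apply: le_trans (ler_wpM2r _ (binr_le NB r)) _.
  by rewrite exprn_ge0 // mulr_ge0 ?expR_ge0 // ltW.
have e1 : (NB%:R : R) ^+ r / (r`!)%:R * (delta * expR delta) ^+ r
   = (NB%:R * delta) ^+ r * (expR delta ^+ r / (r`!)%:R).
  by rewrite !exprMn; field; rewrite lt0r_neq0.
rewrite e1.
have e2 : (expR 1 * y * expR delta / r%:R) ^+ r
   = y ^+ r * (expR delta ^+ r * (expR 1 ^+ r / r%:R ^+ r)).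
  by rewrite !exprMn exprVn; ring.
rewrite e2 ler_pM //.
- by apply: exprn_ge0; rewrite mulr_ge0 // ltW.
- by rewrite lerXn2r // ?nnegrE // mulr_ge0 // ltW.
- apply: ler_wpM2l; first exact: exprn_ge0 (expR_ge0 _).
  rewrite ler_pdivlMr ?exprn_gt0 // mulrC; exact: fact_lb.
Qed.

End Final.

Lemma count_enum_card (T : finType) (A : {set T}) : count (mem A) (enum T) = #|A|.
Proof. by rewrite enumT cardE /enum_mem size_filter. Qed.

Lemma count_flat_nseq (T : Type) (a : pred T) p s :
  count a (flatten (nseq p s)) = (p * count a s)%N.
Proof. by elim: p => //= p IH; rewrite count_cat IH mulSn. Qed.

Lemma count_filter_le (T : Type) (a b : pred T) s : (count a [seq x <- s | b x] <= count a s)%N.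
Proof. by elim: s => //= x s IH; case: (b x) => /=; lia. Qed.

Lemma prod_pow (T : pzSemiRingType) (I : Type) (G : I -> T) s p :
  (\prod_(m <- s) G m) ^+ p = \prod_(m <- flatten (nseq p s)) G m.
Proof.
elim: p => [|p IH]; first by rewrite expr0 big_nil.
by rewrite exprS IH /= big_cat.
Qed.

Lemma count_L (M j p : nat) (a : pred 'I_M) :
  (count a ([seq m : 'I_M <- rev (enum 'I_M) | (m < j)%N] ++ flatten (nseq p (rev (enum 'I_M)))
    ++ flatten (nseq p (enum 'I_M)) ++ [seq m : 'I_M <- enum 'I_M | (m < j)%N])
   <= 2 * p.+1 * count a (enum 'I_M))%N.
Proof.
rewrite !count_cat !count_flat_nseq count_rev.
have h1 := @count_filter_le _ a (fun m : 'I_M => (m < j)%N) (rev (enum 'I_M)).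
have h2 := @count_filter_le _ a (fun m : 'I_M => (m < j)%N) (enum 'I_M).
rewrite count_rev in h1; lia.
Qed.

Lemma pauli_sq (R : rcfType) n (Q : pauli_string n) : pauli_mx R Q * pauli_mx R Q = 1.
Proof.
rewrite pauli_tens tensM.
have -> : (fun q => mul2 (pauli1_entry R (Q q)) (pauli1_entry R (Q q))) = fun _ => id2 R.
  by apply/funext => q; exact: pe_sq.
exact: tens1.
Qed.

Lemma X_eq (T : pzRingType) (I : Type) (G H : I -> T) (hGH : forall m, G m = H m)
  (s1 s2 s3 s4 : seq I) (P1 P2 : pred I) p :
  (\prod_(m <- s1 | P1 m) G m * (\prod_(m <- s2) G m) ^+ p) *
  ((\prod_(m <- s3) G m) ^+ p * \prod_(m <- s4 | P2 m) G m) =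
  \prod_(m <- [seq m <- s1 | P1 m] ++ flatten (nseq p s2) ++ flatten (nseq p s3)
         ++ [seq m <- s4 | P2 m]) H m.
Proof.
have -> : G = H by apply/funext.
rewrite !prod_pow !big_cat /= !big_filter.
by rewrite !mulrA.
Qed.


Unset Implicit Arguments.

Theorem mainTheorem14 (R : realType) (n k M : nat)
    (lam : 'I_M -> R) (Q : 'I_M -> pauli_string n)
    (hlam : forall a : 'I_M, `|lam a| <= 1)
    (hQ : forall a : 'I_M, (#|supp (Q a)| <= k)%N)
    (hk : (0 < k)%N)
    (delta : R) (hdelta : 0 < delta)
    (p j : nat) (hj : (j < M)%N)
    (P : pauli_string n) (hP : supp P != finset.set0) :
  let G := fun m : 'I_M => expm ((delta * lam m)%:C *: pauli_mx R (Q m)) in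
  let Uright := (\prod_(m <- enum 'I_M) G m) ^+ p
                * \prod_(m <- enum 'I_M | (m < j)%N) G m in
  let Uleft := (\prod_(m <- rev (enum 'I_M) | (m < j)%N) G m)
                * (\prod_(m <- rev (enum 'I_M)) G m) ^+ p in
  let X := Uleft * Uright in
  let w := #|supp P| in
  let r := ((w + k.-1) %/ k)%N in
  let B := #|[set a : 'I_M | supp (Q a) :&: supp P != finset.set0]| in
  let beta := (p.+1)%:R * delta in
  (2%:R ^- n)%:C * `|\tr (pauli_mx R P * X)|
    <= ((2 * expR 1 * beta * B%:R * expR delta / r%:R) ^+ r
        * expR (2 * beta * M%:R))%:C.
Proof.
cbv beta zeta.
have hG : forall m, expm ((delta * lam m)%:C *: pauli_mx R (Q m)) = Gm lam Q delta m.
  by move=> m; rewrite /Gm expm_sq // pauli_sq.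
have hfun : (fun m => expm ((delta * lam m)%:C *: pauli_mx R (Q m))) = Gm lam Q delta.
  by apply/funext => m; exact: hG.
set X := (X in pauli_mx R P * X).
set L := [seq m : 'I_M <- rev (enum 'I_M) | (m < j)%N] ++ flatten (nseq p (rev (enum 'I_M)))
    ++ flatten (nseq p (enum 'I_M)) ++ [seq m : 'I_M <- enum 'I_M | (m < j)%N].
have hX : X = \prod_(m <- L) Gm lam Q delta m.
  rewrite /X /L; exact: X_eq.
set f0 := fun q => pauli1_entry R (P q).
have hrn : forall q, rn (f0 q) by move=> q; exact: rn_pe.
have hC : (#|Cset P f0| <= 0 * k)%N.
  rewrite mul0n leqn0 cards_eq0; apply/eqP/setP => q; rewrite !inE.
  by apply/negP => /andP [_ /negP]; apply; exact/asboolP.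
have hkey := key hlam hQ hk hdelta L hrn hC.
rewrite hX pauli_tens -/f0.
apply: le_trans (ler_wpM2l _ hkey) _.
  by rewrite ler0c invr_ge0 exprn_ge0.
rewrite -realCM lecR /Bnd subn0 /rr /Bset.
set r := ((#|supp P| + k.-1) %/ k)%N.
set Bs := [set a | supp (Q a) :&: supp P != finset.set0].
set beta := p.+1%:R * delta.
have hr : (0 < r)%N.
  have : (0 < #|supp P|)%N by rewrite card_gt0.
  rewrite /r -[X in (X <= _)%N]/(1%N) leq_divRL // => h; lia.
have hcnt : (count (mem Bs) L <= 2 * p.+1 * #|Bs|)%N.
  by rewrite -count_enum_card; exact: count_L.
have hsize : (size L <= 2 * p.+1 * M)%N.
  rewrite -count_predT; apply: leq_trans (@count_L M j p predT) _.
  by rewrite count_predT size_enum_ord.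
have e : 2 ^- n * (2 ^+ n * expR (delta * (size L)%:R) * ('C(count (mem Bs) L, r))%:R
      * (delta * expR delta) ^+ r)
    = expR (delta * (size L)%:R) * (('C(count (mem Bs) L, r))%:R * (delta * expR delta) ^+ r).
  by rewrite !mulrA mulVf ?mul1r ?expf_neq0 // -!mulrA.
rewrite e mulrC.
have hy : (count (mem Bs) L)%:R * delta <= 2 * beta * #|Bs|%:R.
  have h1 : (count (mem Bs) L)%:R <= 2 * p.+1%:R * #|Bs|%:R :> R.
    by rewrite -!natrM ler_nat.
  apply: le_trans (ler_wpM2r (ltW hdelta) h1) _.
  by rewrite /beta le_eqVlt; apply/orP; left; apply/eqP; ring.
have hs : delta * (size L)%:R <= 2 * beta * M%:R.
  have h1 : (size L)%:R <= 2 * p.+1%:R * M%:R :> R.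
    by rewrite -!natrM ler_nat.
  rewrite mulrC; apply: le_trans (ler_wpM2r (ltW hdelta) h1) _.
  by rewrite /beta le_eqVlt; apply/orP; left; apply/eqP; ring.
have hfin := final_real (size L) hdelta hr hy.
have -> : 2 * expR 1 * beta * #|Bs|%:R = expR 1 * (2 * beta * #|Bs|%:R) by ring.
apply: ler_pM => //.
  by rewrite mulr_ge0 ?exprn_ge0 // mulr_ge0 ?expR_ge0 // ltW.
by rewrite ler_expR.
Qed.
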